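(* Let $0\le\underline{s}<\overline{s}\le1$ with $\underline{s}=0$ or $\overline{s}=1$, $p\in(0,1)$, $u,v>0$ with $u\ne v$, with $\mathcal{E}_0\ne\emptyset$, fix $\varepsilon_0>0$ and $n\in\mathbb{N}$, and let $$\underline{\lambda}=\min\Big\{\tfrac{u-\sup C_{\varepsilon_0}}{1+\sup C_{\varepsilon_0}},\tfrac{v+\inf C_{\varepsilon_0}}{1-\inf C_{\varepsilon_0}}\Big\},\qquad \overline{\lambda}=\max\Big\{\tfrac{u-\inf C_{\varepsilon_0}}{1+\inf C_{\varepsilon_0}},\tfrac{v+\sup C_{\varepsilon_0}}{1-\sup C_{\varepsilon_0}}\Big\}.$$ Let $F_n^{[\underline{\lambda},\overline{\lambda}]}$ be the set of $f\in F^\infty_{(\underline{s},\overline{s})}$ for which there is $S\subset C_{\varepsilon_0}$ of Lebesgue measure $m(S)\ge\frac1n$ such that for each $c\in S$, $G_f(\lambda,0)=G_f(\lambda,c)=0$ for some $\lambda\in\mathcal{E}_0\cap\mathcal{E}_c\cap[\underline{\lambda},\overline{\lambda}]$, and let $\overline{F}_n^{[\underline{\lambda},\overline{\lambda}]}$ be its closure in $F^\infty_{(\underline{s},\overline{s})}$ (for the $L_\infty$-norm). If $f\in\overline{F}_n^{[\underline{\lambda},\overline{\lambda}]}$, then there exists $S\subset C_{\varepsilon_0}$ with $m(S)\ge\frac1n$ such that for every $c\in S$ the system $G_f(\lambda,0)=G_f(\lambda,c)=0$ has a solution $\lambda\in\overline{\mathcal{E}}_0\cap\overline{\mathcal{E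}}_c\cap[\underline{\lambda},\overline{\lambda}]$.
   Context: $F^\infty_{(\underline{s},\overline{s})}=\{f\in L_\infty(\underline{s},\overline{s})\cap C^0(\underline{s},\overline{s}): \int_{\underline{s}}^{\overline{s}} f(s)\frac{1-2s}{s}ds=0,\ \int_{\underline{s}}^{\overline{s}} f=1,\ f\ge0,\ f(s)\frac{1-s}{s}\in L_\infty(\underline{s},\overline{s})\}$. For $\lambda>0$, $c\in(-1,u)\cap(-v,1)$: $m(\lambda,c)=\frac{\lambda(1+c)}{\lambda(1+c)+(u-c)}$, $mm(\lambda,c)=\frac{\lambda(1-c)}{\lambda(1-c)+(v+c)}$; $\mathcal{E}_c=\{\lambda>0: m(\lambda,c),mm(\lambda,c)\in(\underline{s},\overline{s})\}$, with closure $\overline{\mathcal{E}}_c$ in $\mathbb{R}$. $C=\{c\in(-1,u)\cap(-v,1):\mathcal{E}_c\ne\emptyset\}\setminus\{0\}$, $C_{\varepsilon_0}=C\cap(-1+\varepsilon_0,u-\varepsilon_0)\cap(-v+\varepsilon_0,1-\varepsilon_0)$. For $\lambda$ with $m(\lambda,c),mm(\lambda,c)\in[\underline{s},\overline{s}]$, $G_f(\lambda,c)=p\int_{\underline{s}}^{m(\lambda,c)} f(s)\frac{1-2s}{s}ds+(1-p)\int_{mm(\lambda,c)}^{\overline{s}} f(s)\frac{1-2s}{s}ds$. *)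

(* Defs.v *)
From mathcomp Require Import all_boot all_order all_algebra.
From mathcomp Require Import all_classical all_reals all_analysis.
Set Implicit Arguments. Unset Strict Implicit. Unset Printing Implicit Defensive.
Import Order.TTheory GRing.Theory Num.Theory.
Import numFieldNormedType.Exports.
Local Open Scope classical_set_scope.
Local Open Scope ring_scope.

Section Defs.
Variable R : realType.
Variables (slo shi p u v eps0 : R).

Definition Finf : set (R -> R) := fun f =>
  {within `]slo, shi[, continuous f} /\
  (exists M : R, forall s, slo < s < shi -> `|f s| <= M) /\
  (\int[lebesgue_measure]_(s in `]slo, shi[) (f s * ((1 - 2 * s) / s))%:E = 0)%E /\
  (\int[lebesgue_measure]_(s in `]slo, shi[) (f s)%:E = 1)%E /\
  (forall s, slo < s < shi -> 0 <= f s) /\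
  (exists M : R, forall s, slo < s < shi -> `|f s * ((1 - s) / s)| <= M).

Definition mfun (lam c : R) : R := lam * (1 + c) / (lam * (1 + c) + (u - c)).
Definition mmfun (lam c : R) : R := lam * (1 - c) / (lam * (1 - c) + (v + c)).

Definition Eset (c : R) : set R := fun lam =>
  0 < lam /\ slo < mfun lam c < shi /\ slo < mmfun lam c < shi.

Definition Cset : set R := fun c =>
  -1 < c < u /\ - v < c < 1 /\ Eset c !=set0 /\ c <> 0.

Definition Ceps : set R := fun c =>
  Cset c /\ -1 + eps0 < c < u - eps0 /\ - v + eps0 < c < 1 - eps0.

Definition lam_lo : R :=
  Num.min ((u - sup Ceps) / (1 + sup Ceps)) ((v + inf Ceps) / (1 - inf Ceps)).
Definition lam_hi : R :=
  Num.max ((u - inf Ceps) / (1 + inf Ceps)) ((v + sup Ceps) / (1 - sup Ceps)).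

Definition Gf (f : R -> R) (lam c : R) : \bar R :=
  (p%:E * \int[lebesgue_measure]_(s in `[slo, mfun lam c]) (f s * ((1 - 2 * s) / s))%:E
   + (1 - p)%:E * \int[lebesgue_measure]_(s in `[mmfun lam c, shi]) (f s * ((1 - 2 * s) / s))%:E)%E.

Definition Fn (n : nat) : set (R -> R) := fun f =>
  Finf f /\
  exists S : set R, measurable S /\ S `<=` Ceps /\
    ((n%:R)^-1%:E <= lebesgue_measure S)%E /\
    forall c, S c -> exists lam, Eset 0 lam /\ Eset c lam /\
      lam_lo <= lam <= lam_hi /\ Gf f lam 0 = 0%E /\ Gf f lam c = 0%E.

Definition Fn_closure (n : nat) : set (R -> R) := fun f =>
  Finf f /\
  forall e : R, 0 < e -> exists g, Fn n g /\
    forall s, slo < s < shi -> `|f s - g s| <= e.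

End Defs.

(* Main.v *)
Require Import Defs.
From mathcomp Require Import all_boot all_order all_algebra.
From mathcomp Require Import all_classical all_reals all_analysis.
From mathcomp Require Import ring lra.
From mathcomp Require Import measurable_realfun.
Import Order.TTheory GRing.Theory Num.Theory.
Import numFieldNormedType.Exports.
Local Open Scope classical_set_scope.
Local Open Scope ring_scope.
Section IntLemmas.
Variable R : realType.
Local Notation mu := (@lebesgue_measure R).

Lemma RI_integrable (F : R -> R) (a b M : R) :
  measurable_fun `]a, b[ F -> (forall s, a < s < b -> `|F s| <= M) ->
  mu.-integrable `]a, b[ (EFin \o F).
Proof.
move=> mF bF; apply: measurable_bounded_integrable => //.
  by move: (lebesgue_measure_itv `]a, b[) => /= ->; case: ifP => _; rewrite ?ltry.
rewrite /bounded_near; near=> K => y /= Hy; apply: le_trans (bF _ _) _; first by move: Hy; rewrite in_itv.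
near: K; apply: nbhs_pinfty_ge; exact: num_real.
Unshelve. all: by end_near.
Qed.

Arguments RI_integrable {F a b M}.

Lemma RI_bound (F : R -> R) (a b M : R) : a <= b ->
  measurable_fun `]a, b[ F -> (forall s, a < s < b -> `|F s| <= M) ->
  `|\int[mu]_(s in `]a, b[) F s| <= M * (b - a).
Proof.
move=> ab mF bF.
have iF := RI_integrable mF bF.
apply: le_trans (le_normr_Rintegral _ iF) _ => //.
have -> : M * (b - a) = \int[mu]_(s in `]a, b[) M.
  rewrite Rintegral_cst //; move: (lebesgue_measure_itv `]a, b[) => /= ->.
  rewrite lte_fin; case: ltgtP ab => //= ab _.
  by rewrite ab subrr mulr0.
apply: (@le_Rintegral _ _ R mu) => //.
- apply: (@RI_integrable (fun x => `|F x|) a b M) => [|s Hs].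
    exact: measurableT_comp.
  by rewrite normr_id bF.
- by apply: (@RI_integrable (fun=> M) a b `|M|).
Qed.


Lemma RI_split (F : R -> R) (a b x M : R) : a <= x -> x <= b ->
  measurable_fun `]a, b[ F -> (forall s, a < s < b -> `|F s| <= M) ->
  \int[mu]_(s in `]a, b[) F s =
  \int[mu]_(s in `]a, x[) F s + \int[mu]_(s in `]x, b[) F s.
Proof.
move=> ax; rewrite le_eqVlt => /predU1P[->|xb] mF bF.
  have -> : [set` `]b, b[] = set0 :> set R by apply: set_itv_ge; rewrite bnd_simp ltxx.
  by rewrite [X in _ + X]/Rintegral integral_set0 addr0.
have iF := RI_integrable mF bF.
have := @Rintegral_itvB R F (BRight a) (BLeft b) x iF.
rewrite !bnd_simp => /(_ ax xb) <-.
rewrite -Rintegral_itv_bndo_bndc; first by rewrite addrC subrK.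
apply: integrableS iF => //; apply: subset_itvl; rewrite bnd_simp; exact: ltW.
Qed.

Lemma RI_EFin (F : R -> R) (a b M : R) :
  measurable_fun `]a, b[ F -> (forall s, a < s < b -> `|F s| <= M) ->
  (\int[mu]_(s in `]a, b[) (F s)%:E = (\int[mu]_(s in `]a, b[) F s)%:E)%E.
Proof.
move=> mF bF; have iF := RI_integrable mF bF.
by rewrite /Rintegral fineK //; exact: integrable_fin_num iF.
Qed.

Arguments RI_EFin {F a b M}.

Lemma closed_itv_EFin (F : R -> R) (a b M : R) :
  measurable_fun `]a, b[ F -> (forall s, a < s < b -> `|F s| <= M) ->
  (\int[mu]_(s in `[a, b]) (F s)%:E = (\int[mu]_(s in `]a, b[) F s)%:E)%E.
Proof.
move=> mF bF; rewrite -(RI_EFin mF bF).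
by apply: (@integral_itv_bndoo R a b (EFin \o F) true false); exact/measurable_realfun.measurable_EFinP.
Qed.

Arguments closed_itv_EFin {F a b M}.
Arguments RI_split {F a b x M}.
Arguments RI_bound {F a b M}.
End IntLemmas.
Arguments RI_integrable {R F a b M}.
Arguments RI_EFin {R F a b M}.
Arguments closed_itv_EFin {R F a b M}.
Arguments RI_split {R F a b x M}.
Arguments RI_bound {R F a b M}.

Section FinfLemmas.
Variable R : realType.
Local Notation mu := (@lebesgue_measure R).
Variables (slo shi : R).
Hypothesis Hslo : 0 <= slo.
Hypothesis Hshi : shi <= 1.

Definition phi (F : R -> R) : R -> R := fun s => F s * ((1 - 2 * s) / s).

Lemma Finf_meas (f : R -> R) : Finf slo shi f -> measurable_fun `]slo, shi[ (phi f).
Proof.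
move=> [cf _]; apply: open_continuous_measurable_fun; first exact: interval_open.
move: cf; rewrite continuous_open_subspace; last exact: interval_open.
move=> cf x xI; have x0 : x != 0.
  by move: xI; rewrite inE /= in_itv /= => /andP[+ _]; move=> /(le_lt_trans Hslo); rewrite lt0r => /andP[].
have h1 : (fun s : R => 2 * s) @ x --> 2 * x.
  exact: (cvgM (cvg_cst (2:R)) (@cvg_id _ (nbhs x))).
have h2 : (fun s : R => 1 - 2 * s) @ x --> 1 - 2 * x.
  exact: (cvgB (cvg_cst (1:R)) h1).
have cw : {for x, continuous (fun s : R => (1 - 2 * s) / s)}.
  exact: (cvgM h2 (inv_continuous x0)).
exact: (cvgM (cf x xI) cw).
Qed.

Lemma Finf_bnd (f : R -> R) : Finf slo shi f ->
  exists M : R, forall s, slo < s < shi -> `|phi f s| <= M.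
Proof.
move=> [_ [[M0 HM0] [_ [_ [_ [M1 HM1]]]]]].
exists (M1 + M0) => s Hs.
have s0 : s != 0 by move: Hs => /andP[+ _] => /(le_lt_trans Hslo); rewrite lt0r => /andP[].
have -> : phi f s = f s * ((1 - s) / s) - f s by rewrite /phi; field.
by apply: le_trans (ler_normB _ _) _; apply: lerD; [exact: HM1 | exact: HM0].
Qed.

Lemma Finf_total (f : R -> R) : Finf slo shi f ->
  \int[mu]_(s in `]slo, shi[) phi f s = 0.
Proof. by move=> [_ [_ [H _]]]; rewrite /Rintegral /phi H. Qed.


Lemma sub_oo (a b c d : R) : a <= c -> d <= b -> `]c, d[ `<=` `]a, b[.
Proof.
move=> ac db t /=; rewrite !in_itv /= => /andP[h1 h2]; apply/andP; split.
  exact: le_lt_trans h1.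
exact: lt_le_trans db.
Qed.

Arguments sub_oo {a b c d}.

Lemma in_oo (a b t : R) : [set` `]a, b[] t -> a < t < b.
Proof. by rewrite /= in_itv. Qed.

Arguments Finf_bnd {f}.
Arguments Finf_meas {f}.
Arguments Finf_total {f}.

Definition Pf F x := \int[mu]_(s in `]slo, x[) phi F s.
Definition Qf F x := \int[mu]_(s in `]x, shi[) phi F s.

Lemma PQ_sum (f : R -> R) (x : R) : Finf slo shi f -> slo <= x -> x <= shi -> Pf f x + Qf f x = 0.
Proof.
move=> Hf h1 h2; have [M HM] := Finf_bnd Hf.
by rewrite -(Finf_total Hf) (RI_split h1 h2 (Finf_meas Hf) HM).
Qed.

Arguments PQ_sum {f x}.

Lemma restr_bnd (F : R -> R) (M a b : R) : (forall s, slo < s < shi -> `|F s| <= M) ->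
  slo <= a -> b <= shi -> forall s, a < s < b -> `|F s| <= M.
Proof.
move=> H ha hb s /andP[h1 h2]; apply: H; apply/andP; split; [exact: le_lt_trans ha h1 | exact: lt_le_trans h2 hb].
Qed.

Arguments restr_bnd {F M a b}.

Lemma P_lip (f : R -> R) (M x y : R) : Finf slo shi f -> (forall s, slo < s < shi -> `|phi f s| <= M) ->
  slo <= x -> x <= y -> y <= shi -> `|Pf f y - Pf f x| <= M * (y - x).
Proof.
move=> Hf HM h1 h2 h3.
have mF := measurable_funS (measurable_itv _) (sub_oo (lexx slo) h3) (Finf_meas Hf).
rewrite /Pf (RI_split h1 h2 mF (restr_bnd HM (lexx _) h3)) addrC addKr.
apply: (RI_bound h2); last exact: (restr_bnd HM h1 h3).
exact: measurable_funS (measurable_itv _) (sub_oo h1 h3) (Finf_meas Hf).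
Qed.

Lemma Q_lip (f : R -> R) (M x y : R) : Finf slo shi f -> (forall s, slo < s < shi -> `|phi f s| <= M) ->
  slo <= x -> x <= y -> y <= shi -> `|Qf f x - Qf f y| <= M * (y - x).
Proof.
move=> Hf HM h1 h2 h3.
have mF := measurable_funS (measurable_itv _) (sub_oo h1 (lexx shi)) (Finf_meas Hf).
rewrite /Qf (RI_split h2 h3 mF (restr_bnd HM h1 (lexx _))) addrK.
apply: (RI_bound h2); last exact: (restr_bnd HM h1 h3).
exact: measurable_funS (measurable_itv _) (sub_oo h1 h3) (Finf_meas Hf).
Qed.


Lemma w_bnd (x s : R) : 0 < x -> x < s -> s <= 1 -> `|(1 - 2 * s) / s| <= x^-1.
Proof.
move=> x0 xs s1; have s0 : 0 < s by exact: lt_trans xs.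
rewrite normrM normfV (gtr0_norm s0).
have h1 : `|1 - 2 * s| <= 1 by rewrite ler_norml; apply/andP; split; lra.
have h2 : `|1 - 2 * s| / s <= s^-1 by rewrite ler_pdivrMr // mulVf ?gt_eqF.
by apply: le_trans h2 _; rewrite lef_pV2 ?posrE // ltW.
Qed.

Lemma Q_diff (f g : R -> R) (e x : R) : Finf slo shi f -> Finf slo shi g -> 0 <= e ->
  (forall s, slo < s < shi -> `|f s - g s| <= e) -> 0 < x -> slo <= x -> x <= shi ->
  `|Qf f x - Qf g x| <= e / x.
Proof.
move=> Hf Hg e0 Hfg x0 h1 h2.
have [Mf HMf] := Finf_bnd Hf; have [Mg HMg] := Finf_bnd Hg.
have mf := measurable_funS (measurable_itv _) (sub_oo h1 (lexx shi)) (Finf_meas Hf).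
have mg := measurable_funS (measurable_itv _) (sub_oo h1 (lexx shi)) (Finf_meas Hg).
rewrite /Qf -(@RintegralB _ _ R mu) //; last 2 first.
  exact: (RI_integrable mf (restr_bnd HMf h1 (lexx _))).
  exact: (RI_integrable mg (restr_bnd HMg h1 (lexx _))).
apply: le_trans (@RI_bound R (fun s => phi f s - phi g s) x shi (e / x) h2 _ _) _.
- exact: measurable_funB.
- move=> s /andP[xs ss].
  rewrite /phi -mulrBl normrM; apply: ler_pM => //.
    apply: Hfg; apply/andP; split; [exact: le_lt_trans xs | exact: ss].
  by apply: w_bnd => //; apply: le_trans Hshi; apply: ltW.
- have : 0 <= e / x by rewrite divr_ge0 // ltW.
  move=> hex; have : shi - x <= 1 by rewrite lerBlDr; apply: le_trans Hshi _; rewrite lerDl ltW.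
  move=> hsx; rewrite -[leRHS]mulr1; exact: (ler_wpM2l hex hsx).
Qed.

Arguments Q_diff {f g e x}.

Lemma P_diff (f g : R -> R) (e x : R) : Finf slo shi f -> Finf slo shi g -> 0 <= e ->
  (forall s, slo < s < shi -> `|f s - g s| <= e) -> 0 < x -> slo <= x -> x <= shi ->
  `|Pf f x - Pf g x| <= e / x.
Proof.
move=> Hf Hg e0 Hfg x0 h1 h2.
have -> : Pf f x - Pf g x = - (Qf f x - Qf g x).
  have := PQ_sum Hf h1 h2; have := PQ_sum Hg h1 h2; lra.
by rewrite normrN; exact: Q_diff.
Qed.


Lemma Gf_real (F : R -> R) (p u v lam c : R) : Finf slo shi F ->
  slo <= Defs.mfun u lam c -> Defs.mfun u lam c <= shi ->
  slo <= Defs.mmfun v lam c -> Defs.mmfun v lam c <= shi ->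
  Gf slo shi p u v F lam c =
  (p * Pf F (Defs.mfun u lam c) + (1 - p) * Qf F (Defs.mmfun v lam c))%:E.
Proof.
move=> Hf h1 h2 h3 h4; have [M HM] := Finf_bnd Hf.
have m1 := measurable_funS (measurable_itv _) (sub_oo (lexx slo) h2) (Finf_meas Hf).
have m2 := measurable_funS (measurable_itv _) (sub_oo h3 (lexx shi)) (Finf_meas Hf).
rewrite /Gf (closed_itv_EFin m1 (restr_bnd HM (lexx _) h2)).
rewrite (closed_itv_EFin m2 (restr_bnd HM h3 (lexx _))).
by rewrite -!EFinM -EFinD.
Qed.

End FinfLemmas.
Section K.
Variable R : realType.

Lemma kfun_lip (t t' b : R) : 0 <= t -> 0 <= t' -> 0 < b ->
  `|t / (t + b) - t' / (t' + b)| <= `|t - t'| / b.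
Proof.
move=> t0 t'0 b0.
have d1 : t + b != 0 by rewrite gt_eqF // ltr_wpDl.
have d2 : t' + b != 0 by rewrite gt_eqF // ltr_wpDl.
have -> : t / (t + b) - t' / (t' + b) = (t - t') * (b / ((t + b) * (t' + b))).
  by field; rewrite d1 d2.
rewrite normrM [X in _ * X]ger0_norm; last first.
  by apply: divr_ge0; [exact: ltW | apply: mulr_ge0; apply: addr_ge0 => //; exact: ltW].
apply: ler_wpM2l => //.
have hp : 0 < (t + b) * (t' + b) by rewrite mulr_gt0 // ltr_wpDl.
rewrite ler_pdivrMr //.
have hy : b^-1 * b = 1 by rewrite mulVf // gt_eqF.
have y0 : 0 < b^-1 by rewrite invr_gt0.
nra.
Qed.

Lemma kfun_mono (t t' b : R) : 0 <= t -> t <= t' -> 0 < b ->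
  t / (t + b) <= t' / (t' + b).
Proof.
move=> t0 tt b0.
have hp : 0 < t + b by rewrite ltr_wpDl.
have hp' : 0 < t' + b by rewrite ltr_wpDl // (le_trans t0).
rewrite ler_pdivrMr // mulrAC ler_pdivlMr //.
nra.
Qed.

Lemma kfun_pos (t b : R) : 0 < t -> 0 < b -> 0 < t / (t + b).
Proof. by move=> t0 b0; rewrite divr_gt0 // addr_gt0. Qed.


Lemma closed_approx (lo hi z K : R) : 0 <= K ->
  (forall eta, 0 < eta -> exists y, lo < y < hi /\ `|z - y| <= K * eta) ->
  lo <= z /\ z <= hi.
Proof.
move=> K0 H; split; rewrite leNgt; apply/negP => hz.
- have e0 : 0 < (lo - z) / (K + 1) by rewrite divr_gt0 ?subr_gt0 // ltr_wpDl.
  have [y [/andP[ly _] hy]] := H _ e0.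
  have : K * ((lo - z) / (K + 1)) < lo - z.
    rewrite mulrA ltr_pdivrMr ?ltr_wpDl //; nra.
  have : y - z <= `|z - y| by rewrite distrC ler_norm.
  lra.
- have e0 : 0 < (z - hi) / (K + 1) by rewrite divr_gt0 ?subr_gt0 // ltr_wpDl.
  have [y [/andP[_ yh] hy]] := H _ e0.
  have : K * ((z - hi) / (K + 1)) < z - hi.
    rewrite mulrA ltr_pdivrMr ?ltr_wpDl //; nra.
  have : z - y <= `|z - y| by rewrite ler_norm.
  lra.
Qed.

Lemma small_N (B eps : R) : 0 <= B -> 0 < eps -> exists N : nat, B / (N.+1)%:R <= eps.
Proof.
move=> B0 e0; have h := archi_boundP (divr_ge0 B0 (ltW e0)).
exists (Num.bound (B / eps)).
set N := Num.bound (B / eps) in h *.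
have hN : 0 < (N.+1)%:R :> R by rewrite ltr0n.
rewrite ler_pdivrMr //.
move: h; rewrite ltr_pdivrMr // => h.
have : (N%:R : R) <= (N.+1)%:R by rewrite ler_nat.
nra.
Qed.

Arguments small_N {B eps}.

Lemma zero_by_approx (z A B : R) : 0 <= A -> 0 <= B ->
  (forall eta : R, 0 < eta -> forall N : nat, exists M : nat, (N <= M)%N /\ `|z| <= A * eta + B / (M.+1)%:R) ->
  z = 0.
Proof.
move=> A0 B0 H; apply/eqP; rewrite -normr_eq0; apply/eqP.
apply/le_anti; rewrite normr_ge0 andbT.
apply/ler_addgt0Pr => e e0; rewrite add0r.
have e2 : 0 < e / 2 by rewrite divr_gt0.
have [N HN] := small_N B0 e2.
have eta0 : 0 < e / 2 / (A + 1) by rewrite divr_gt0 // ltr_wpDl.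
have [M [NM HM]] := H _ eta0 N.
apply: le_trans HM _.
have h1 : A * (e / 2 / (A + 1)) <= e / 2.
  rewrite mulrA ler_pdivrMr ?ltr_wpDl //; nra.
have h2 : B / (M.+1)%:R <= B / (N.+1)%:R.
  apply: ler_wpM2l => //; rewrite lef_pV2 ?posrE ?ltr0n // ler_nat; exact: NM.
set X := A * _ in h1 *; set Y := B / M.+1%:R in h2 *; set Z := B / N.+1%:R in h2 HN *; lra.
Qed.

End K.

Section Main.
Variable R : realType.
Variables (slo shi p u v : R).
Hypothesis Hslo : 0 <= slo.
Hypothesis Hshi : shi <= 1.
Hypothesis Hp0 : 0 <= p.
Hypothesis Hp1 : p <= 1.


Lemma m_lip (c l l' : R) : -1 < c -> c < u -> 0 <= l -> 0 <= l' ->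
  `|Defs.mfun u l c - Defs.mfun u l' c| <= (1 + c) / (u - c) * `|l - l'|.
Proof.
move=> c1 c2 hl hl'.
have h1c : 0 <= 1 + c by lra.
have huc : 0 < u - c by lra.
apply: le_trans (@kfun_lip R (l * (1 + c)) (l' * (1 + c)) (u - c) (mulr_ge0 hl h1c) (mulr_ge0 hl' h1c) huc) _.
rewrite -mulrBl normrM (ger0_norm h1c) le_eqVlt; apply/orP; left; apply/eqP.
by field; rewrite gt_eqF.
Qed.

Lemma mm_lip (c l l' : R) : -v < c -> c < 1 -> 0 <= l -> 0 <= l' ->
  `|Defs.mmfun v l c - Defs.mmfun v l' c| <= (1 - c) / (v + c) * `|l - l'|.
Proof.
move=> c1 c2 hl hl'.
have h1c : 0 <= 1 - c by lra.
have huc : 0 < v + c by lra.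
apply: le_trans (@kfun_lip R (l * (1 - c)) (l' * (1 - c)) (v + c) (mulr_ge0 hl h1c) (mulr_ge0 hl' h1c) huc) _.
rewrite -mulrBl normrM (ger0_norm h1c) le_eqVlt; apply/orP; left; apply/eqP.
by field; rewrite gt_eqF.
Qed.

Lemma m_mono (c l l' : R) : -1 < c -> c < u -> 0 <= l -> l <= l' ->
  Defs.mfun u l c <= Defs.mfun u l' c.
Proof.
move=> c1 c2 hl hll.
have h1c : 0 <= 1 + c by lra.
have huc : 0 < u - c by lra.
exact: (@kfun_mono R (l * (1 + c)) (l' * (1 + c)) (u - c) (mulr_ge0 hl h1c) (ler_wpM2r h1c hll) huc).
Qed.

Lemma mm_mono (c l l' : R) : -v < c -> c < 1 -> 0 <= l -> l <= l' ->
  Defs.mmfun v l c <= Defs.mmfun v l' c.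
Proof.
move=> c1 c2 hl hll.
have h1c : 0 <= 1 - c by lra.
have huc : 0 < v + c by lra.
exact: (@kfun_mono R (l * (1 - c)) (l' * (1 - c)) (v + c) (mulr_ge0 hl h1c) (ler_wpM2r h1c hll) huc).
Qed.

Lemma m_pos (c l : R) : -1 < c -> c < u -> 0 < l -> 0 < Defs.mfun u l c.
Proof.
move=> c1 c2 hl; apply: kfun_pos; last by lra.
by apply: mulr_gt0 => //; lra.
Qed.

Lemma mm_pos (c l : R) : -v < c -> c < 1 -> 0 < l -> 0 < Defs.mmfun v l c.
Proof.
move=> c1 c2 hl; apply: kfun_pos; last by lra.
by apply: mulr_gt0 => //; lra.
Qed.

Lemma comb_bnd (x y : R) : `|p * x + (1 - p) * y| <= `|x| + `|y|.
Proof.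
have hp : 0 <= 1 - p by rewrite subr_ge0.
apply: le_trans (ler_normD _ _) _; rewrite !normrM (ger0_norm Hp0) (ger0_norm hp).
apply: lerD; rewrite -[leRHS]mul1r; apply: ler_wpM2r => //.
by rewrite lerBlDr lerDl.
Qed.

Lemma P_lip2 (f : R -> R) (M x y : R) : Finf slo shi f ->
  (forall s, slo < s < shi -> `|phi R f s| <= M) ->
  slo <= x -> x <= shi -> slo <= y -> y <= shi ->
  `|Pf R slo f x - Pf R slo f y| <= M * `|x - y|.
Proof.
move=> Hf HM h1 h2 h3 h4; case: (leP x y) => hxy.
  have -> : `|x - y| = y - x by rewrite distrC ger0_norm // subr_ge0.
  rewrite distrC; exact: (@P_lip R slo shi Hslo f M x y Hf HM h1 hxy h4).
have -> : `|x - y| = x - y by rewrite ger0_norm // subr_ge0 ltW.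
exact: (@P_lip R slo shi Hslo f M y x Hf HM h3 (ltW hxy) h2).
Qed.

Lemma Q_lip2 (f : R -> R) (M x y : R) : Finf slo shi f ->
  (forall s, slo < s < shi -> `|phi R f s| <= M) ->
  slo <= x -> x <= shi -> slo <= y -> y <= shi ->
  `|Qf R shi f x - Qf R shi f y| <= M * `|x - y|.
Proof.
move=> Hf HM h1 h2 h3 h4; case: (leP x y) => hxy.
  have -> : `|x - y| = y - x by rewrite distrC ger0_norm // subr_ge0.
  exact: (@Q_lip R slo shi Hslo f M x y Hf HM h1 hxy h4).
have -> : `|x - y| = x - y by rewrite ger0_norm // subr_ge0 ltW.
rewrite distrC; exact: (@Q_lip R slo shi Hslo f M y x Hf HM h3 (ltW hxy) h2).
Qed.

Lemma limit_G (f : R -> R) (gs : nat -> R -> R) (kk : nat -> nat) (b : nat -> R) (c lo L : R) :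
  Finf slo shi f -> (forall k, Finf slo shi (gs k)) ->
  (forall k s, slo < s < shi -> `|f s - gs k s| <= (k.+1%:R)^-1) ->
  -1 < c -> c < u -> -v < c -> c < 1 -> 0 < lo -> lo <= L ->
  (forall M, (M <= kk M)%N) ->
  (forall M, lo <= b M /\ Eset slo shi u v c (b M) /\ Gf slo shi p u v (gs (kk M)) (b M) c = 0%E) ->
  (forall eta, 0 < eta -> forall N, exists M, (N <= M)%N /\ `|L - b M| < eta) ->
  Gf slo shi p u v f L c = 0%E.
Proof.
move=> Hf Hg Hcl c1 c2 c3 c4 lo0 loL Hkk Hb Hclu.
have L0 : 0 <= L by apply: ltW; exact: lt_le_trans lo0 loL.
have bpos M : 0 <= b M by apply: ltW; exact: lt_le_trans lo0 (Hb M).1.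
have Eb M : (slo < Defs.mfun u (b M) c < shi) /\ (slo < Defs.mmfun v (b M) c < shi).
  by have [_ [H1 H2]] := (Hb M).2.1.
set K1 := (1 + c) / (u - c).
set K2 := (1 - c) / (v + c).
have K1_0 : 0 <= K1 by rewrite divr_ge0 //; lra.
have K2_0 : 0 <= K2 by rewrite divr_ge0 //; lra.
have hmL : slo <= Defs.mfun u L c /\ Defs.mfun u L c <= shi.
  apply: (@closed_approx R slo shi _ K1 K1_0) => eta eta0.
  have [M [_ HM]] := Hclu eta eta0 0%N.
  exists (Defs.mfun u (b M) c); split; first by case: (Eb M).
  apply: le_trans (@m_lip c L (b M) c1 c2 L0 (bpos M)) _.
  by apply: ler_wpM2l => //; exact: ltW.
have hmmL : slo <= Defs.mmfun v L c /\ Defs.mmfun v L c <= shi.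
  apply: (@closed_approx R slo shi _ K2 K2_0) => eta eta0.
  have [M [_ HM]] := Hclu eta eta0 0%N.
  exists (Defs.mmfun v (b M) c); split; first by case: (Eb M).
  apply: le_trans (@mm_lip c L (b M) c3 c4 L0 (bpos M)) _.
  by apply: ler_wpM2l => //; exact: ltW.
have [Mf HMf0] := @Finf_bnd R slo shi Hslo f Hf.
set Mf' := `|Mf|.
have HMf s : slo < s < shi -> `|phi R f s| <= Mf'.
  by move=> hs; apply: le_trans (HMf0 s hs) _; exact: ler_norm.
have Mf0 : 0 <= Mf' by exact: normr_ge0.
set d1 := Defs.mfun u lo c.
set d2 := Defs.mmfun v lo c.
have d1_0 : 0 < d1 by exact: m_pos.
have d2_0 : 0 < d2 by exact: mm_pos.
case: hmL => hmL1 hmL2; case: hmmL => hmmL1 hmmL2.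
rewrite (@Gf_real R slo shi Hslo f p u v L c Hf hmL1 hmL2 hmmL1 hmmL2).
apply/eqP; rewrite eqe; apply/eqP.
apply: (@zero_by_approx R _ (Mf' * (K1 + K2)) (d1^-1 + d2^-1)).
- by rewrite mulr_ge0 // addr_ge0.
- by rewrite addr_ge0 // invr_ge0 ltW.
move=> eta eta0 N.
have [M [NM HM]] := Hclu eta eta0 N.
exists M; split => //.
set g := gs (kk M).
have Hgg : Finf slo shi g := Hg (kk M).
have [[mb1 mb2] [mmb1 mmb2]] : (slo < Defs.mfun u (b M) c /\ Defs.mfun u (b M) c < shi) /\
   (slo < Defs.mmfun v (b M) c /\ Defs.mmfun v (b M) c < shi).
  by case: (Eb M) => /andP[? ?] /andP[? ?].
have G0 : p * Pf R slo g (Defs.mfun u (b M) c) + (1 - p) * Qf R shi g (Defs.mmfun v (b M) c) = 0.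
  have := (Hb M).2.2.
  rewrite (@Gf_real R slo shi Hslo g p u v (b M) c Hgg (ltW mb1) (ltW mb2) (ltW mmb1) (ltW mmb2)).
  by move/eqP; rewrite eqe => /eqP.
set mL := Defs.mfun u L c; set mmL := Defs.mmfun v L c.
set mb := Defs.mfun u (b M) c; set mmb := Defs.mmfun v (b M) c.
have mb0 : 0 < mb by exact: le_lt_trans Hslo mb1.
have mmb0 : 0 < mmb by exact: le_lt_trans Hslo mmb1.
set e := (kk M).+1%:R^-1 : R.
have e0 : 0 <= e by rewrite invr_ge0 ler0n.
have eM : e <= (M.+1)%:R^-1 by rewrite lef_pV2 ?posrE ?ltr0n // ler_nat ltnS.
have -> : p * Pf R slo f mL + (1 - p) * Qf R shi f mmL =
   p * (Pf R slo f mL - Pf R slo g mb) + (1 - p) * (Qf R shi f mmL - Qf R shi g mmb).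
  by rewrite -[LHS]subr0 -G0; ring.
apply: le_trans (comb_bnd _ _) _.
have -> : Mf' * (K1 + K2) * eta + (d1^-1 + d2^-1) / M.+1%:R =
  (Mf' * (K1 * eta) + d1^-1 / M.+1%:R) + (Mf' * (K2 * eta) + d2^-1 / M.+1%:R) by ring.
apply: lerD.
- apply: le_trans (ler_distD (Pf R slo f mb) _ _) _.
  apply: lerD.
  + apply: le_trans (@P_lip2 f Mf' mL mb Hf HMf hmL1 hmL2 (ltW mb1) (ltW mb2)) _.
    apply: ler_wpM2l => //.
    apply: le_trans (@m_lip c L (b M) c1 c2 L0 (bpos M)) _.
    by apply: ler_wpM2l => //; exact: ltW.
  + apply: le_trans (@P_diff R slo shi Hslo Hshi f g e mb Hf Hgg e0 (Hcl (kk M)) mb0 (ltW mb1) (ltW mb2)) _.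
    rewrite [X in _ <= X]mulrC; apply: ler_pM => //; first by rewrite invr_ge0 ltW.
    rewrite lef_pV2 ?posrE //; apply: m_mono => //; [exact: ltW | exact: (Hb M).1].
- apply: le_trans (ler_distD (Qf R shi f mmb) _ _) _.
  apply: lerD.
  + apply: le_trans (@Q_lip2 f Mf' mmL mmb Hf HMf hmmL1 hmmL2 (ltW mmb1) (ltW mmb2)) _.
    apply: ler_wpM2l => //.
    apply: le_trans (@mm_lip c L (b M) c3 c4 L0 (bpos M)) _.
    by apply: ler_wpM2l => //; exact: ltW.
  + apply: le_trans (@Q_diff R slo shi Hslo Hshi f g e mmb Hf Hgg e0 (Hcl (kk M)) mmb0 (ltW mmb1) (ltW mmb2)) _.
    rewrite [X in _ <= X]mulrC; apply: ler_pM => //; first by rewrite invr_ge0 ltW.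
    rewrite lef_pV2 ?posrE //; apply: mm_mono => //; [exact: ltW | exact: (Hb M).1].
Qed.

End Main.
Lemma limsup_measure (R : realType) (a : \bar R) (Ss : nat -> set R) (B : set R) :
  measurable B -> (lebesgue_measure B < +oo)%E ->
  (forall k, measurable (Ss k) /\ Ss k `<=` B /\ (a <= lebesgue_measure (Ss k))%E) ->
  (a <= lebesgue_measure (\bigcap_N \bigcup_k Ss (k + N)%N))%E.
Proof.
move=> mB Bfin HS.
set U := fun N => \bigcup_k Ss (k + N)%N.
have mU N : measurable (U N) by apply: bigcupT_measurable => k; exact: (HS _).1.
have UB N : U N `<=` B by move=> x [k _ hk]; exact: (HS _).2.1 _ hk.
have cv : lebesgue_measure \o U @ \oo --> lebesgue_measure (\bigcap_N U N).
  apply: nonincreasing_cvg_mu => [| | |m n mn].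
  - apply: (le_lt_trans _ Bfin); apply: le_measure; [rewrite inE; exact: mU | rewrite inE; exact: mB | exact: UB].
  - exact: mU.
  - exact: bigcapT_measurable.
  - apply/subsetPset => x [k _ hk]; exists (k + (n - m))%N => //.
    by rewrite -addnA subnK.
rewrite -(cvg_lim _ cv) //.
apply: lime_ge; first by apply/cvg_ex; eexists; exact: cv.
apply: nearW => N /=.
have [mN [_ hN]] := HS N.
apply: le_trans hN _; apply: le_measure; [rewrite inE; exact: mN | rewrite inE; exact: mU |].
by move=> x hx; exists 0%N.
Qed.
Lemma closure_of_approx (R : realType) (E : set R) (b : nat -> R) (L : R) :
  (forall M, E (b M)) ->
  (forall eta, 0 < eta -> forall N, exists M, (N <= M)%N /\ `|L - b M| < eta) ->
  closure E L.
Proof.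
move=> HE Hc B /nbhs_ballP [e e0 HB].
have [M [_ HM]] := Hc e e0 0%N.
exists (b M); split => //; apply: HB; exact: HM.
Qed.

Lemma cluster_pt (R : realType) (b : nat -> R) (lo hi : R) :
  (forall M, lo <= b M <= hi) ->
  exists L, lo <= L <= hi /\
    (forall eta, 0 < eta -> forall N, exists M, (N <= M)%N /\ `|L - b M| < eta).
Proof.
move=> Hb.
have Hin : (b @ \oo) [set` `[lo, hi]] by exists 0%N => // M _; rewrite /= in_itv; exact: Hb.
have [L [HL1 HL2]] := @segment_compact R lo hi (b @ \oo) _ Hin.
exists L; split; first by move: HL1; rewrite /= in_itv.
move=> eta eta0 N.
have := HL2 (b @` [set M | (N <= M)%N]) (ball L eta) _ (nbhsx_ballx _ _ eta0).
case => [|y [[M NM <-] hy]]; last by exists M; split.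
by exists N => // M NM; exists M.
Qed.

Lemma lamlo_pos (R : realType) (slo shi u v eps0 c0 : R) : 0 < eps0 ->
  Ceps slo shi u v eps0 c0 -> 0 < lam_lo slo shi u v eps0.
Proof.
move=> e0 Hc0.
set C := Ceps slo shi u v eps0.
have hC c : C c -> (-1 + eps0 < c < u - eps0) /\ (- v + eps0 < c < 1 - eps0).
  by case=> _ [h1 h2].
have ne : C !=set0 by exists c0.
have ub : ubound C (u - eps0) by move=> c /hC [/andP[_ h] _]; exact: ltW.
have lb : lbound C (- v + eps0) by move=> c /hC [_ /andP[h _]]; exact: ltW.
have hub : has_ubound C by exists (u - eps0).
have hlb : has_lbound C by exists (- v + eps0).
have s1 : sup C <= u - eps0 by exact: ge_sup.
have s2 : c0 <= sup C by exact: ub_le_sup.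
have i1 : - v + eps0 <= inf C by exact: lb_le_inf.
have i2 : inf C <= c0 by exact: ge_inf.
have [/andP[c1 c2] /andP[c3 c4]] := hC c0 Hc0.
rewrite /lam_lo -/C lt_min; apply/andP; split; apply: divr_gt0; lra.
Qed.

Theorem proposition12 (R : realType) (slo shi p u v eps0 : R) (n : nat)
  (Hslo : 0 <= slo) (Hs : slo < shi) (Hshi : shi <= 1)
  (Hends : slo = 0 \/ shi = 1)
  (Hp : 0 < p < 1) (Hu : 0 < u) (Hv : 0 < v) (Huv : u != v)
  (HE0 : Eset slo shi u v 0 !=set0)
  (Heps : 0 < eps0) (Hn : (0 < n)%N)
  (f : R -> R) :
  Fn_closure slo shi p u v eps0 n f ->
  exists S : set R, measurable S /\ S `<=` Ceps slo shi u v eps0 /\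
    ((n%:R)^-1%:E <= lebesgue_measure S)%E /\
    forall c, S c -> exists lam,
      closure (Eset slo shi u v 0) lam /\ closure (Eset slo shi u v c) lam /\
      lam_lo slo shi u v eps0 <= lam <= lam_hi slo shi u v eps0 /\
      Gf slo shi p u v f lam 0 = 0%E /\ Gf slo shi p u v f lam c = 0%E.
Proof.
move=> [Hf Hcl].
have Hp0 : 0 <= p by case/andP: Hp => h _; exact: ltW.
have Hp1 : p <= 1 by case/andP: Hp => _ h; exact: ltW.
have Hek (k : nat) : 0 < (k.+1%:R : R)^-1 by rewrite invr_gt0 ltr0n.
have : forall k : nat, exists g, Fn slo shi p u v eps0 n g /\
    forall s, slo < s < shi -> `|f s - g s| <= (k.+1%:R)^-1.
  by move=> k; exact: Hcl _ (Hek k).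
move=> /choice [gs Hgs].
have : forall k : nat, exists S : set R, measurable S /\ S `<=` Ceps slo shi u v eps0 /\
    ((n%:R^-1)%:E <= lebesgue_measure S)%E /\
    forall c, S c -> exists lam, Eset slo shi u v 0 lam /\ Eset slo shi u v c lam /\
      lam_lo slo shi u v eps0 <= lam <= lam_hi slo shi u v eps0 /\
      Gf slo shi p u v (gs k) lam 0 = 0%E /\ Gf slo shi p u v (gs k) lam c = 0%E.
  by move=> k; exact: (Hgs k).1.2.
move=> /choice [Ss HSs].
have : forall k : nat, exists F : R -> R, forall c, Ss k c ->
    Eset slo shi u v 0 (F c) /\ Eset slo shi u v c (F c) /\
      lam_lo slo shi u v eps0 <= F c <= lam_hi slo shi u v eps0 /\
      Gf slo shi p u v (gs k) (F c) 0 = 0%E /\ Gf slo shi p u v (gs k) (F c) c = 0%E.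
  move=> k.
  have : forall c, exists lam, Ss k c ->
    Eset slo shi u v 0 lam /\ Eset slo shi u v c lam /\
      lam_lo slo shi u v eps0 <= lam <= lam_hi slo shi u v eps0 /\
      Gf slo shi p u v (gs k) lam 0 = 0%E /\ Gf slo shi p u v (gs k) lam c = 0%E.
    move=> c; case: (pselect (Ss k c)) => h; last by exists 0.
    by have [lam Hl] := (HSs k).2.2.2 c h; exists lam.
  move=> /choice [F HF]; exists F; exact: HF.
move=> /choice [lamF HlamF].
have SsC k : Ss k `<=` Ceps slo shi u v eps0 by have [_ [H _]] := HSs k.
exists (\bigcap_N \bigcup_k Ss (k + N)%N).
split.
  apply: bigcapT_measurable => N; apply: bigcupT_measurable => k.
  by have [H _] := HSs (k + N)%N.
have Sub : \bigcap_N \bigcup_k Ss (k + N)%N `<=` Ceps slo shi u v eps0.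
  by move=> c Hc; have [k _ hk] := Hc 0%N I; exact: SsC _ _ hk.
split; first exact: Sub.
split.
  apply: (@limsup_measure R _ Ss `]-1, 1[).
  - exact: measurable_itv.
  - have H := @lebesgue_measure_itv R `]-1, 1[.
    rewrite /= in H; rewrite H; case: ifP => _; by rewrite ?ltry.
  - move=> k; have [H1 [_ [H3 _]]] := HSs k; split => //; split => //.
    move=> c /SsC [[/andP[c1 c2] [/andP[c3 c4] _]] _].
    by rewrite /= in_itv /= c1 c4.
move=> c Hc.
have Hcc := Sub c Hc.
have [[/andP[c1 c2] [/andP[c3 c4] _]] _] := Hcc.
have : forall N : nat, exists j : nat, Ss (j + N)%N c.
  by move=> N; have [j _ h] := Hc N I; exists j.
move=> /choice [jj Hjj].
pose kk := fun N : nat => (jj N + N)%N.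
pose b := fun N => lamF (kk N) c.
have Hb N := HlamF (kk N) c (Hjj N).
have [L [/andP[hL1 hL2] Hclu]] := @cluster_pt R b (lam_lo slo shi u v eps0) (lam_hi slo shi u v eps0)
  (fun M => (Hb M).2.2.1).
have lo0 := @lamlo_pos R slo shi u v eps0 c Heps Hcc.
have Hkk M : (M <= kk M)%N by rewrite /kk leq_addl.
exists L.
split; first exact: (@closure_of_approx R _ b L (fun M => (Hb M).1) Hclu).
split; first exact: (@closure_of_approx R _ b L (fun M => (Hb M).2.1) Hclu).
split; first by rewrite hL1 hL2.
have Hgf k : Finf slo shi (gs k) by exact: (Hgs k).1.1.
have Hcl' k : forall s, slo < s < shi -> `|f s - gs k s| <= (k.+1%:R)^-1 by exact: (Hgs k).2.
split.
  apply: (@limit_G R slo shi p u v Hslo Hshi Hp0 Hp1 f gs kk b 0 (lam_lo slo shi u v eps0) L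
    Hf Hgf Hcl') => //; try lra.
  by move=> M; have [H1 [H2 [H3 [H4 H5]]]] := Hb M; case/andP: H3 => H3 _; split => //; split.
apply: (@limit_G R slo shi p u v Hslo Hshi Hp0 Hp1 f gs kk b c (lam_lo slo shi u v eps0) L
  Hf Hgf Hcl') => //; try lra.
by move=> M; have [H1 [H2 [H3 [H4 H5]]]] := Hb M; case/andP: H3 => H3 _; split => //; split.
Qed.
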